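(* There is an absolute constant $K$ such that the following holds. Let $C\ge1$, let $I$ be an instance of dynamic bin packing with migration delays in which every item has duration at least $1$, run Algorithm 3 (described in the context) on $I$, and let $\tilde I_s$ be the instance of small parts defined in the context. Then $\mathrm{FirstFit}(\tilde I_s)\le K\sqrt{C}\cdot\mathrm{OPT}(I)$.
   Context: Dynamic bin packing with migration delays: bins have capacity $1$; items arrive online at times $a_i\ge0$ with size $s_i\in[0,1]$ and initial duration $d_i>0$ (unknown at arrival). Each migration of an item (moving it to another bin) increases its duration by $C$. A bin is open while nonempty. For an instance $J$ (a set of items with arrival times, sizes, durations), $\mathrm{FirstFit}(J)$ is the total active time $\int_0^\infty(\text{number of open bins at } t)\,dt$ of the FirstFit algorithm on $J$ (each arriving item goes into the earliest-opened open bin with enough remaining capacity, else a new bin; no migrations), and $\mathrm{OPT}(J)=\int_0^\infty\mathrm{OPT}_t\,dt$ with $\mathrm{OPT}_t$ the minimum number of unit bins needed to pack the items of $J$ present at time $t$. Algorithm 3: maintain two disjoint pools of bins $I_s$ and $I_b$. Each arriving item is placed into $I_s$ by FirstFit (within that pool). When an item has been in $I_s$ for exactly $\sqrt{C}$ time, it is migrated into $I_b$ by FirstFit. When an item has been in $I_b$ for exactly $C+\sqrt{C}$ time since its most recent migration, it is migrated into $I_b$ by FirstFit. Small parts: for each item $i$ of $I$, let $t_1$ be the time of its first migration by Algorithm 3, if any. The small part of $i$ is an item of size $s_i$, arrival time $a_i$, and duration $t_1-a_i$ if $i$ is ever migrated and $d_i$ otherwise. $\tilde I_s$ is the instance consisting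 of all small parts. *)

(* Defs.v *)
From HB Require Import structures.
From mathcomp Require Import all_boot all_order all_algebra.
From mathcomp Require Import all_classical all_reals all_analysis.
Set Implicit Arguments. Unset Strict Implicit. Unset Printing Implicit Defensive.
Import Order.TTheory GRing.Theory Num.Theory.
Local Open Scope ring_scope.

Section DBP.
Variable R : realType.

Record item := Item { iarr : R; isize : R; idur : R }.

Definition item0 : item := Item 0 0 0.

Definition dep (x : item) : R := iarr x + idur x.
Definition present (t : R) (x : item) : bool := (iarr x <= t) && (t < dep x).

Definition valid_item (x : item) : bool :=
  [&& 0 <= iarr x, 0 <= isize x, isize x <= 1 & 0 < idur x].

Definition present_items (J : seq item) (t : R) : seq item := [seq x <- J | present t x].

Definition packable (P : seq item) (k : nat) : bool :=
  [exists f : {ffun 'I_(size P) -> 'I_k},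
     [forall b : 'I_k, \sum_(i < size P | f i == b) isize (nth item0 P i) <= 1]].

(* OPT_t: minimum number of unit bins for the items present at time t
   (size P bins always suffice for valid items, hence the default value). *)
Definition OPT_t (J : seq item) (t : R) : nat :=
  let P := present_items J t in
  \big[minn/size P]_(k < (size P).+1 | packable P k) k.

Definition OPT (J : seq item) : \bar R :=
  (\int[lebesgue_measure]_(t in `[0%R, +oo[%classic) ((OPT_t J t)%:R)%:E)%E.

(* A bin is represented by the list of all items ever put in it (in order). *)
Definition load_at (t : R) (b : seq item) : R := \sum_(y <- b | t < dep y) isize y.
Definition alive (t : R) (b : seq item) : bool := has (fun y => t < dep y) b.

Fixpoint ff_insert (t : R) (x : item) (bs : seq (seq item)) : seq (seq item) :=
  match bs with
  | [::] => [:: [:: x]]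
  | b :: bs' => if load_at t b + isize x <= 1 then rcons b x :: bs'
                else b :: ff_insert t x bs'
  end.

(* state: (open bins in opening order, closed bins).  At an arrival at time t,
   items with departure time <= t have already left, and bins that became
   empty are closed (and never reused). *)
Definition ff_step (st : seq (seq item) * seq (seq item)) (x : item) :=
  let t := iarr x in
  (ff_insert t x [seq b <- st.1 | alive t b],
   st.2 ++ [seq b <- st.1 | ~~ alive t b]).

(* items are processed by arrival time; simultaneous arrivals in list order
   (mathcomp's merge sort is stable) *)
Definition ff_bins (J : seq item) : seq (seq item) :=
  let st := foldl ff_step ([::], [::]) (sort (fun x y => iarr x <= iarr y) J) in
  st.2 ++ st.1.

Definition bin_open (b : seq item) : R := iarr (head item0 b).
Definition bin_close (b : seq item) : R := foldr Num.max (bin_open b) [seq dep y | y <- b].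

Definition ff_open_bins (J : seq item) (t : R) : nat :=
  count (fun b => (bin_open b <= t) && (t < bin_close b)) (ff_bins J).

Definition FirstFit (J : seq item) : \bar R :=
  (\int[lebesgue_measure]_(t in `[0%R, +oo[%classic) ((ff_open_bins J t)%:R)%:E)%E.

(* Under Algorithm 3 an item sits in I_s from its arrival a_i until it departs
   (time a_i + d_i) or until it has been there sqrt C time, at which moment it
   is first migrated. *)
Definition first_migration (C : R) (x : item) : option R :=
  if Num.sqrt C < idur x then Some (iarr x + Num.sqrt C) else None.

Definition small_part (C : R) (x : item) : item :=
  Item (iarr x) (isize x)
       (match first_migration C x with Some t1 => t1 - iarr x | None => idur x end).

Definition small_parts (C : R) (I : seq item) : seq item := map (small_part C) I.

End DBP.

(* Main.v *)
Require Import Defs.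
From HB Require Import structures.
From mathcomp Require Import all_boot all_order all_algebra.
From mathcomp Require Import all_classical all_reals all_analysis.
From mathcomp Require Import zify ring lra measurable_realfun.
Import Order.TTheory GRing.Theory Num.Theory.
Local Open Scope ring_scope.
Set Implicit Arguments. Unset Strict Implicit. Unset Printing Implicit Defensive.
Definition item_to (R : realType) (x : item R) := (iarr x, isize x, idur x).
Definition item_of (R : realType) (p : R * R * R) := Item p.1.1 p.1.2 p.2.
Lemma item_toK (R : realType) : cancel (@item_to R) (@item_of R).
Proof. by case. Qed.
HB.instance Definition _ (R : realType) := Equality.copy (item R) (can_type (@item_toK R)).

Section Comb.
Variable R : realType.
Implicit Types (x y : item R) (b : seq (item R)) (bs : seq (seq (item R))).

Definition pairOK b1 b2 :=
  1 < load_at (iarr (last (item0 R) b2)) b1 + isize (last (item0 R) b2).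

Lemma load_at_rcons t b x : 0 <= isize x -> load_at t b <= load_at t (rcons b x).
Proof.
move=> hx; rewrite /load_at big_rcons /=; case: ifP => _; last by rewrite addr0.
by rewrite lerDl.
Qed.

Lemma pairOK_rcons b b2 x : 0 <= isize x -> pairOK b b2 -> pairOK (rcons b x) b2.
Proof.
move=> hx; rewrite /pairOK => h; apply: (lt_le_trans h); rewrite lerD2r.
exact: load_at_rcons.
Qed.

Lemma ff_insert_all_pairOK t x b1 bs : all (pairOK b1) bs ->
  1 < load_at (iarr x) b1 + isize x -> all (pairOK b1) (ff_insert t x bs).
Proof.
elim: bs => [|b bs IH] /=.
  by move=> _ h; rewrite /pairOK /= h.
move=> /andP[h1 h2] h; case: ifP => _ /=.
  by rewrite h2 /pairOK last_rcons h.
by rewrite h1 IH.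
Qed.

Lemma ff_insert_pairwise x bs : 0 <= isize x -> pairwise pairOK bs ->
  pairwise pairOK (ff_insert (iarr x) x bs).
Proof.
move=> hx; elim: bs => [|b bs IH] //=.
move=> /andP[h1 h2]; case: ifP => hf /=.
  rewrite h2 andbT; apply: sub_all h1 => b2; exact: pairOK_rcons.
rewrite IH // andbT; apply: ff_insert_all_pairOK => //.
by rewrite ltNge hf.
Qed.

Lemma ff_insert_all (Q : pred (seq (item R))) t x bs : all Q bs -> Q [:: x] ->
  {in bs, forall b, Q (rcons b x)} -> all Q (ff_insert t x bs).
Proof.
elim: bs => [|b bs IH] /=; first by move=> _ ->.
move=> /andP[h1 h2] hx hr; case: ifP => _ /=.
  by rewrite h2 hr ?mem_head.
rewrite h1 IH // => b' hb'; apply: hr; by rewrite inE hb' orbT.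
Qed.

Lemma ff_insert_perm t x bs : perm_eq (flatten (ff_insert t x bs)) (rcons (flatten bs) x).
Proof.
elim: bs => [|b bs IH] /=; first by [].
case: ifP => _ /=.
  by rewrite -!cats1 -!catA perm_cat2l perm_catC.
by rewrite rcons_cat perm_cat2l IH.
Qed.

Lemma ff_step_perm st x :
  perm_eq (flatten ((ff_step st x).2 ++ (ff_step st x).1)) (rcons (flatten (st.2 ++ st.1)) x).
Proof.
rewrite /ff_step /= !flatten_cat.
apply: (@perm_trans _ ((flatten st.2 ++ flatten [seq b <- st.1 | ~~ alive (iarr x) b]) ++
   rcons (flatten [seq b <- st.1 | alive (iarr x) b]) x)).
  by rewrite perm_cat2l ff_insert_perm.
rewrite -catA rcons_cat perm_cat2l -!cats1 catA perm_cat2r -flatten_cat.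
apply: perm_flatten; rewrite perm_catC.
by have := perm_filterC (alive (iarr x)) st.1 st.1; rewrite perm_refl.
Qed.

Lemma alive_mono t t' b : t <= t' -> alive t' b -> alive t b.
Proof. move=> h; apply: sub_has => y; exact: le_lt_trans. Qed.

Definition Inv (st : seq (seq (item R)) * seq (seq (item R))) (tau : R) (P : seq (item R)) :=
  [/\ pairwise pairOK st.1,
      all (fun b => all (fun y => iarr y <= iarr (last (item0 R) b)) b) st.1,
      all (fun y => iarr y <= tau) (flatten (st.2 ++ st.1)),
      all (fun b => ~~ alive tau b) st.2 &
      perm_eq (flatten (st.2 ++ st.1)) P].

Lemma Inv_mono st tau tau' P : tau <= tau' -> Inv st tau P -> Inv st tau' P.
Proof.
move=> h [h1 h2 h3 h4 h5]; split => //.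
  apply: sub_all h3 => y hy; exact: le_trans h.
apply: sub_all h4 => b; apply: contra; exact: alive_mono.
Qed.

Lemma all_flatten (a : pred (item R)) bs : all a (flatten bs) = all (all a) bs.
Proof. by elim: bs => //= b bs IH; rewrite all_cat IH. Qed.

Lemma Inv_step st tau P x : Inv st tau P -> tau <= iarr x -> 0 <= isize x ->
  Inv (ff_step st x) (iarr x) (rcons P x).
Proof.
move=> [h1 h2 h3 h4 h5] hx hs.
have hp := ff_step_perm st x.
split.
- by apply: ff_insert_pairwise => //; apply: pairwise_filter.
- apply: ff_insert_all => /=.
  + rewrite all_filter; apply: sub_all h2 => b hb; exact/implyP.
  + by rewrite le_refl.
  + move=> b; rewrite mem_filter => /andP[_ hb].
    rewrite last_rcons all_rcons le_refl /=.
    move: h3; rewrite all_flatten all_cat => /andP[_ /allP /(_ b hb)].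
    apply: sub_all => y hy; exact: le_trans hx.
- rewrite (perm_all _ hp) all_rcons le_refl /=.
  apply: sub_all h3 => y hy; exact: le_trans hx.
- rewrite /= all_cat filter_all andbT.
  apply: sub_all h4 => b; apply: contra; exact: alive_mono.
- apply: perm_trans hp _.
  by rewrite -!cats1 perm_cat2r.
Qed.

Lemma Inv_run xs st tau P t : Inv st tau P -> tau <= t ->
  sorted (fun x y => iarr x <= iarr y) xs ->
  all (fun x => tau <= iarr x) xs -> all (fun x => iarr x <= t) xs ->
  all (fun x => 0 <= isize x) xs ->
  Inv (foldl (@ff_step R) st xs) t (P ++ xs).
Proof.
elim: xs st tau P => [|x xs IH] st tau P /=.
  by move=> hI ht _ _ _ _; rewrite cats0; exact: Inv_mono ht hI.
move=> hI ht hsort /andP[hx1 hx2] /andP[hx3 hx4] /andP[hx5 hx6].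
rewrite -cat_rcons; apply: (IH _ (iarr x)) => //.
- exact: Inv_step hI hx1 hx5.
- exact: path_sorted hsort.
- apply: order_path_min hsort => a b c; exact: le_trans.
Qed.

Definition Qt (t : R) b := (bin_open b <= t) && alive t b.
Definition bins (st : seq (seq (item R)) * seq (seq (item R))) := st.2 ++ st.1.

Lemma lt_foldr_max t a0 b :
  (t < foldr Num.max a0 [seq dep y | y <- b]) = (t < a0) || alive t b.
Proof.
elim: b => [|y b IH] /=; first by rewrite orbF.
by rewrite lt_max IH orbCA.
Qed.

Lemma Pt_eq t b : ((bin_open b <= t) && (t < bin_close b)) = Qt t b.
Proof.
by rewrite /Qt /bin_close lt_foldr_max; case: leP => //= h.
Qed.

Lemma count_ff_insert t x L : t < iarr x -> all (alive (iarr x)) L ->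
  count (Qt t) (ff_insert (iarr x) x L) = count (Qt t) L.
Proof.
move=> ht; elim: L => [|b L IH] /=.
  by move=> _; rewrite /Qt /bin_open /= leNgt ht.
move=> /andP[hb hL]; case: ifP => _ /=; last by rewrite IH.
congr (_ + _)%N; case: b hb {IH} => [|y b] // hb.
have ha : alive t (y :: b) := alive_mono (ltW ht) hb.
rewrite /Qt; change (bin_open (rcons (y :: b) x)) with (bin_open (y :: b)).
by rewrite /alive has_rcons -/(alive t (y :: b)) ha orbT.
Qed.

Lemma count_filter_split (Q a : pred (seq (item R))) bs :
  (count Q [seq b <- bs | ~~ a b] + count Q [seq b <- bs | a b] = count Q bs)%N.
Proof.
elim: bs => //= b bs IH; case: (a b) => /=; rewrite -IH; lia.
Qed.

Lemma count_step t st x : t < iarr x ->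
  count (Qt t) (bins (ff_step st x)) = count (Qt t) (bins st).
Proof.
move=> ht; rewrite /bins /ff_step /= !count_cat count_ff_insert //; last exact: filter_all.
by rewrite -addnA count_filter_split.
Qed.

Lemma count_run t xs st : all (fun x => t < iarr x) xs ->
  count (Qt t) (bins (foldl (@ff_step R) st xs)) = count (Qt t) (bins st).
Proof.
elim: xs st => [|x xs IH] st //= /andP[hx hxs].
by rewrite IH // count_step.
Qed.

Lemma sorted_split t (s : seq (item R)) : sorted (fun x y => iarr x <= iarr y) s ->
  s = [seq x <- s | iarr x <= t] ++ [seq x <- s | ~~ (iarr x <= t)].
Proof.
elim: s => [|x s IH] //= hp.
have hs := path_sorted hp.
case: ifP => hx /=; first by rewrite -IH.
have hall : all (fun y => iarr x <= iarr y) s.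
  by apply: order_path_min hp => a b c; exact: le_trans.
have -> : [seq y <- s | iarr y <= t] = [::].
  apply/eqP; rewrite -(negbK (_ == _)) -has_filter; apply/hasPn => y hy.
  move/allP: hall => /(_ y hy) hxy; apply/negP => hyt.
  by move: hx; rewrite (le_trans hxy hyt).
have -> : [seq y <- s | ~~ (iarr y <= t)] = s.
  apply/all_filterP/allP => y hy; move/allP: hall => /(_ y hy) hxy.
  apply/negP => hyt; by move: hx; rewrite (le_trans hxy hyt).
by [].
Qed.

Lemma chain_bound (T : eqType) (r : rel T) (W : T -> R) (s : seq T) (a : T) :
  pairwise r (a :: s) -> {in a :: s &, forall u v, r u v -> 1 < W u + W v} ->
  {in a :: s, forall u, 0 <= W u} ->
  (size (a :: s))%:R + W a <= 1 + 2 * \sum_(u <- a :: s) W u.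
Proof.
elim: s a => [|b s IH] a hp hr hW.
  rewrite /= big_cons big_nil; have := hW a (mem_head _ _); lra.
move: hp => /= /andP[/andP[hab has] hp].
have h1 : 1 < W a + W b by apply: hr => //; rewrite !inE eqxx ?orbT.
have h2 := IH b hp (sub_in2 (fun u hu => mem_behead hu) hr) (sub_in1 (fun u hu => mem_behead hu) hW).
have ha := hW a (mem_head _ _).
move: h2; rewrite !big_cons /=.
have -> : ((size s).+2)%:R = 1 + (1 + (size s)%:R) :> R by rewrite !mulrS.
have -> : ((size s).+1)%:R = 1 + (size s)%:R :> R by rewrite !mulrS.
lra.
Qed.

Lemma le_sum_mem (s : seq (item R)) (c : pred (item R)) (f : item R -> R) y :
  y \in s -> c y -> (forall z, z \in s -> 0 <= f z) -> f y <= \sum_(z <- s | c z) f z.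
Proof.
elim: s => [|z s IH] //; rewrite inE => /orP[/eqP<- | hy] hc hf.
  rewrite big_cons hc lerDl big_seq_cond; apply: sumr_ge0 => u /andP[hu _]; apply: hf; exact: mem_behead.
rewrite big_cons; case: ifP => _.
  rewrite -[f y]add0r; apply: lerD; first by apply: hf; exact: mem_head.
  by apply: IH => // u hu; apply: hf; exact: mem_behead.
by apply: IH => // u hu; apply: hf; exact: mem_behead.
Qed.

Lemma ler_sum_seq (T : eqType) (s : seq T) (F G : T -> R) :
  (forall i, i \in s -> F i <= G i) -> \sum_(i <- s) F i <= \sum_(i <- s) G i.
Proof.
elim: s => [|z s IH] h; first by rewrite !big_nil.
rewrite !big_cons; apply: lerD; first by apply: h; exact: mem_head.
by apply: IH => i hi; apply: h; exact: mem_behead.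
Qed.

Definition Wt t L b := \sum_(y <- b | t - 2 * L <= iarr y) isize y.

Lemma Inv_bound st t P L : Inv st t P -> 0 <= L ->
  (forall y, y \in P -> 0 <= isize y /\ idur y <= L) ->
  (0 < count (alive t) st.1)%N ->
  (count (alive t) st.1)%:R <= 1 + 2 * \sum_(y <- P | t - 2 * L <= iarr y) isize y.
Proof.
move=> [h1 h2 h3 h4 h5] hL hP hc.
have memP : forall b y, b \in st.2 ++ st.1 -> y \in b -> y \in P.
  move=> b y hb hy; rewrite -(perm_mem h5); apply/flattenP; by exists b.
have memP1 : forall b y, b \in st.1 -> y \in b -> y \in P.
  by move=> b y hb; apply: memP; rewrite mem_cat hb orbT.
pose W := Wt t L.
have hW0 : forall b, b \in st.2 ++ st.1 -> 0 <= W b.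
  move=> b hb; rewrite /W /Wt big_seq_cond; apply: sumr_ge0 => y /andP[hy _].
  by case: (hP y (memP b y hb hy)).
set O' := [seq b <- st.1 | alive t b].
have hpair : {in O' &, forall u v, pairOK u v -> 1 < W u + W v}.
  move=> u v; rewrite !mem_filter => /andP[_ hu] /andP[hva hv].
  rewrite /pairOK; set z := last (item0 R) v.
  case: v hva hv @z => [|w v'] // hva hv z.
  have hz : z \in w :: v' by rewrite /z /=; exact: mem_last.
  have hzt : iarr z <= t.
    move/allP: h3; apply; apply/flattenP; exists (w :: v') => //.
    by rewrite mem_cat hv orbT.
  have [y hy hty] := hasP hva.
  have hyz : iarr y <= iarr z.
    by move/allP: h2 => /(_ _ hv) /allP /(_ _ hy).
  have [hys hyd] := hP y (memP1 _ _ hv hy).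
  have hzL : t - L < iarr z by rewrite /dep in hty; lra.
  have hl : load_at (iarr z) u <= W u.
    rewrite /load_at /W /Wt !big_mkcond /=.
    rewrite [X in _ <= X]big_mkcond /=; apply: ler_sum_seq => y' hy'.
    have [hs hd] := hP y' (memP1 _ _ hu hy').
    case: ifP => h; case: ifP => h' //.
    by move: h h'; rewrite /dep => h /negbT; rewrite -ltNge; lra.
  have hs : isize z <= W (w :: v').
    apply: le_sum_mem => //; first by lra.
    by move=> y' hy'; case: (hP y' (memP1 _ _ hv hy')).
  lra.
have hsum : \sum_(b <- O') W b <= \sum_(y <- P | t - 2 * L <= iarr y) isize y.
  apply: (@le_trans _ _ (\sum_(b <- st.2 ++ st.1) W b)).
    rewrite big_cat /= -[X in X <= _]add0r; apply: lerD.
      by rewrite big_seq; apply: sumr_ge0 => b hb; apply: hW0; rewrite mem_cat hb.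
    rewrite big_filter big_mkcond /=; apply: ler_sum_seq => b hb.
    by case: ifP => // _; apply: hW0; rewrite mem_cat hb orbT.
  by rewrite /W /Wt -big_flatten /= (perm_big _ h5).
rewrite -size_filter -/O'.
have hW0' : {in O', forall u, 0 <= W u}.
  by move=> u; rewrite mem_filter => /andP[_ hu]; apply: hW0; rewrite mem_cat hu orbT.
move: hc hpair hW0' hsum; rewrite -size_filter -/O'.
have hpw : pairwise pairOK O' by apply: pairwise_filter.
case: O' hpw => [|a s'] // hpw _ hpair hW0' hsum.
have := chain_bound hpw hpair hW0'.
have := hW0' a (mem_head _ _).
lra.
Qed.

Lemma count_Qt_dead t bs : all (fun b => ~~ alive t b) bs -> count (Qt t) bs = 0%N.
Proof.
elim: bs => //= b bs IH /andP[hb hbs]; rewrite IH // addn0.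
by rewrite /Qt (negbTE hb) andbF.
Qed.

Lemma ff_bound (J : seq (item R)) (L t : R) : 0 <= L -> 0 <= t ->
  all (fun y => 0 <= isize y) J -> all (fun y => idur y <= L) J ->
  all (fun y => 0 <= iarr y) J ->
  (0 < ff_open_bins J t)%N ->
  (exists2 y, y \in J & present t y) /\
  (ff_open_bins J t)%:R <= 1 + 2 * \sum_(y <- J | (iarr y <= t) && (t - 2 * L <= iarr y)) isize y.
Proof.
move=> hL ht hJs hJd hJa hpos.
pose le := fun x y : item R => iarr x <= iarr y.
have htot : total le by move=> x y; exact: le_total.
have hsort : sorted le (sort le J) := sort_sorted htot J.
set S := sort le J in hsort.
have memS : forall y, y \in S -> y \in J by move=> y; rewrite mem_sort.
have hsplit := sorted_split t hsort.
set S1 := [seq x <- S | iarr x <= t] in hsplit.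
set S2 := [seq x <- S | ~~ (iarr x <= t)] in hsplit.
have memS1 : forall y, y \in S1 -> y \in J /\ iarr y <= t.
  by move=> y; rewrite mem_filter => /andP[h1 h2]; split => //; apply: memS.
have hI0 : Inv ([::], [::]) 0 [::] by split.
have hI : Inv (foldl (@ff_step R) ([::], [::]) S1) t ([::] ++ S1).
  apply: Inv_run hI0 ht _ _ _ _.
  - apply: sorted_filter => //; move=> a b c; exact: le_trans.
  - by apply/allP => y /memS1 [hy _]; move/allP: hJa; apply.
  - exact: filter_all.
  - by apply/allP => y /memS1 [hy _]; move/allP: hJs; apply.
set st1 := foldl (@ff_step R) ([::], [::]) S1 in hI.
have hm : ff_open_bins J t = count (Qt t) (bins st1).
  rewrite /ff_open_bins /ff_bins -/le -/S hsplit foldl_cat (eq_count (Pt_eq t)).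
  rewrite -/(bins _) count_run //.
  by apply/allP => y; rewrite mem_filter => /andP[h _]; rewrite ltNge.
case: (hI) => h1 h2 h3 h4 h5.
have hc : (ff_open_bins J t <= count (alive t) st1.1)%N.
  rewrite hm /bins count_cat count_Qt_dead // add0n.
  by apply: sub_count => b /andP[].
have hcpos : (0 < count (alive t) st1.1)%N by exact: leq_trans hpos hc.
split.
  have /hasP [b hb hba] : has (alive t) st1.1 by rewrite has_count.
  have /hasP [y hy hyt] := hba.
  have hyP : y \in S1.
    rewrite -(perm_mem h5) /=; apply/flattenP; exists b => //.
    by rewrite mem_cat hb orbT.
  have [hyJ hya] := memS1 y hyP.
  by exists y => //; rewrite /present hya.
apply: (@le_trans _ _ (count (alive t) st1.1)%:R); first by rewrite ler_nat.
have hb := Inv_bound hI hL _ hcpos.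
apply: le_trans (hb _) _.
  move=> y /memS1 [hyJ _]; split; [move/allP: hJs | move/allP: hJd]; exact.
rewrite /= big_filter_cond (perm_big _ (permEl (perm_sort le J))).
by apply: lerD => //; rewrite ler_pM2l //; apply/eqP ;rewrite eq_sym; apply/eqP; apply: eq_bigl => y.
Qed.

Lemma sum_le_size (P : seq (item R)) :
  (forall x, x \in P -> isize x <= 1) -> \sum_(x <- P) isize x <= (size P)%:R.
Proof.
elim: P => [|x P IH] h; first by rewrite big_nil.
rewrite big_cons /= -add1n natrD; apply: lerD; first by apply: h; exact: mem_head.
by apply: IH => y hy; apply: h; rewrite inE hy orbT.
Qed.

Lemma packable_sum (P : seq (item R)) (k : nat) : packable P k ->
  \sum_(x <- P) isize x <= k%:R.
Proof.
move=> /existsP[f /forallP hf].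
rewrite (big_nth (item0 R)) big_mkord.
rewrite (partition_big (fun i => f i) xpredT) //=.
apply: (@le_trans _ _ (\sum_(j < k) (1 : R))).
  by apply: ler_sum => j _; exact: hf.
by rewrite sumr_const card_ord.
Qed.

Lemma OPT_ge_sum (J : seq (item R)) t : all (@valid_item R) J ->
  \sum_(x <- present_items J t) isize x <= (OPT_t J t)%:R.
Proof.
move=> hv; rewrite /OPT_t.
set P := present_items J t.
have hP : forall x, x \in P -> isize x <= 1.
  move=> x; rewrite mem_filter => /andP[_ hx].
  by move/allP: hv => /(_ x hx) /and4P[].
apply: (big_ind (fun k : nat => \sum_(x <- P) isize x <= k%:R)).
- exact: sum_le_size.
- by move=> a b ha hb; rewrite /minn; case: ifP.
- move=> k hk; exact: packable_sum.
Qed.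

Lemma OPT_ge1 (J : seq (item R)) t : present_items J t != [::] -> (1 <= OPT_t J t)%N.
Proof.
move=> hne; rewrite /OPT_t.
set P := present_items J t in hne *.
have hs : (0 < size P)%N by rewrite lt0n size_eq0.
apply: (big_ind (fun k : nat => 0 < k)%N) => //.
- by move=> a b ha hb; rewrite /minn; case: ifP.
- move=> k /existsP[f _]; rewrite lt0n; apply/negP => /eqP hk.
  have := f (Ordinal hs); rewrite hk => -[m]; by rewrite ltn0.
Qed.

End Comb.
Section Meas.
Variable R : realType.

Definition ivb (p : R * R) (t : R) := (p.1 <= t) && (t < p.2).

Lemma meas_pre (T : Type) (ps : seq (R * R)) (Phi : seq bool -> T) (Y : set T) :
  measurable (fun t : measurableTypeR R => Y (Phi (map (ivb ^~ t) ps))).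
Proof.
elim: ps Phi => [|p ps IH] Phi /=.
  case: (pselect (Y (Phi [::]))) => h.
    by have -> : (fun _ : measurableTypeR R => Y (Phi [::])) = setT by apply/seteqP; split.
  by have -> : (fun _ : measurableTypeR R => Y (Phi [::])) = set0 by apply/seteqP; split.
have -> : (fun t : measurableTypeR R => Y (Phi (ivb p t :: map (ivb ^~ t) ps))) =
  (([set` (`[p.1, p.2[)%R] `&` (fun t => Y (Phi (true :: map (ivb ^~ t) ps)))) `|`
  (~` [set` (`[p.1, p.2[)%R] `&` (fun t => Y (Phi (false :: map (ivb ^~ t) ps)))))%classic.
  apply/seteqP; split => t /=; (have E : (t \in `[p.1, p.2[) = ivb p t by rewrite in_itv); rewrite E.
    by case: (ivb p t) => h; [left|right].
  by case: (ivb p t) => -[] // [].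
apply: measurableU; apply: measurableI.
- exact: measurable_itv.
- exact: (IH (fun s => Phi (true :: s))).
- apply: measurableC; exact: measurable_itv.
- exact: (IH (fun s => Phi (false :: s))).
Qed.

Lemma meas_fun_bv (ps : seq (R * R)) (Phi : seq bool -> \bar R) (D : set (measurableTypeR R)) :
  measurable_fun D (fun t : measurableTypeR R => Phi (map (ivb ^~ t) ps)).
Proof.
move=> mD Y _; apply: measurableI => //.
exact: (meas_pre ps Phi Y).
Qed.

End Meas.

Section Int.
Variable R : realType.
Notation D := (`[0%R, +oo[%classic : set (measurableTypeR R)).

Lemma indic_ivb (a b : R) (t : R) :
  ((ivb (a, b) t)%:R : R) = \1_([set` `[a, b[] : set (measurableTypeR R)) t.
Proof.
rewrite indicE; congr ((nat_of_bool _)%:R).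
apply/idP/idP => h.
  by rewrite in_setE /= in_itv /=.
by move: h; rewrite in_setE /= in_itv /=.
Qed.

Lemma int_one (a w c : R) : 0 <= a -> 0 < w -> 0 <= c ->
  (\int[lebesgue_measure]_(t in D) (c * (ivb (a, a + w) t)%:R)%:E = (c * w)%:E)%E.
Proof.
move=> ha hw hc.
under eq_integral => t _ do rewrite indic_ivb.
have hneg : c < 0 -> (fun _ : R => [set` (`[a, a + w[)%R]%classic : set (measurableTypeR R)) c = set0.
  by move=> hc'; move: (lt_le_trans hc' hc); rewrite ltxx.
have E := integralZl_indic (m := lebesgue_measure) (measurable_itv `[0%R, +oo[%R) (fun _ : R => [set` (`[a, a + w[)%R]%classic : set (measurableTypeR R)) c hneg (measurable_itv _).
cbv beta in E; rewrite E.
have E2 := integral_indic (lebesgue_measure : measure (measurableTypeR R) R) (measurable_itv `[0%R, +oo[%R) (measurable_itv `[a, a + w[%R).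
rewrite E2 setIidl; last first.
  move=> t /=; rewrite !in_itv /= andbT => /andP[h _]; exact: le_trans h.
have E3 := lebesgue_measure_itv `[a, a + w[%R.
move: E3; rewrite /= lte_fin ltrDl hw => E3.
transitivity (c%:E * ((a + w)%:E - a%:E))%E; first by congr (_ * _)%E; exact: E3.
rewrite -EFinB -EFinM.
congr (_%:E); ring.
Qed.

Lemma meas_sum (I : seq (item R)) (c : item R -> R) (f : item R -> R * R) (A : set (measurableTypeR R)) :
  measurable_fun A (fun t : measurableTypeR R => (\sum_(x <- I) c x * (ivb (f x) t)%:R)%:E).
Proof.
have -> : (fun t : measurableTypeR R => (\sum_(x <- I) c x * (ivb (f x) t)%:R)%:E) =
   (fun t => \sum_(x <- I) (c x * (ivb (f x) t)%:R)%:E)%E.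
  by apply/funext => t; rewrite sumEFin.
apply: emeasurable_sum => x.
exact: (meas_fun_bv [:: f x] (fun s => (c x * (head false s)%:R)%:E)).
Qed.

Lemma int_sum (I : seq (item R)) (c : item R -> R) (w : R) : 0 < w ->
  (forall x, x \in I -> 0 <= c x /\ 0 <= iarr x) ->
  (\int[lebesgue_measure]_(t in D) (\sum_(x <- I) c x * (ivb (iarr x, iarr x + w) t)%:R)%:E
     = (\sum_(x <- I) c x * w)%:E)%E.
Proof.
move=> hw; elim: I => [|x I IH] hI.
  rewrite big_nil.
  under eq_integral => t _ do rewrite big_nil.
  by rewrite integral0.
have [hc ha] := hI x (mem_head _ _).
have hI' : forall y, y \in I -> 0 <= c y /\ 0 <= iarr y.
  by move=> y hy; apply: hI; rewrite inE hy orbT.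
under eq_integral => t _ do rewrite big_cons EFinD.
rewrite ge0_integralD.
- by rewrite int_one // IH // big_cons EFinD.
- exact: measurable_itv.
- by move=> t _; rewrite lee_fin; apply: mulr_ge0.
- exact: (meas_fun_bv [:: (iarr x, iarr x + w)] (fun s => (c x * (head false s)%:R)%:E)).
- move=> t _; rewrite lee_fin big_seq; apply: sumr_ge0 => y hy.
  by apply: mulr_ge0 => //; case: (hI' y hy).
- exact: meas_sum.
Qed.
End Int.

Section Main.
Variable R : realType.
Notation D := (`[0%R, +oo[%classic : set (measurableTypeR R)).

Lemma small_facts (C : R) (x : item R) : 1 <= idur x ->
  [/\ iarr (small_part C x) = iarr x, isize (small_part C x) = isize x,
      idur (small_part C x) <= Num.sqrt C & dep (small_part C x) <= dep x].
Proof.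
move=> hd; rewrite /small_part /first_migration /dep /=.
case: ifP => h /=; split => //.
- by rewrite addrAC subrr add0r.
- by rewrite addrAC subrr add0r lerD2l ltW.
- by rewrite leNgt h.
Qed.


Lemma pointwise (C : R) (I : seq (item R)) t : 1 <= C -> all (@valid_item R) I ->
  all (fun x => 1 <= idur x) I -> 0 <= t ->
  (ff_open_bins (small_parts C I) t)%:R <=
  (OPT_t I t)%:R + \sum_(x <- I) (2 * isize x) * (ivb (iarr x, iarr x + 3 * Num.sqrt C) t)%:R.
Proof.
move=> hC hv hd ht.
set L := Num.sqrt C.
have hL1 : 1 <= L by rewrite /L -sqrtr1 ler_wsqrtr.
have hL0 : 0 <= L by lra.
have hvx : forall x, x \in I -> [/\ 0 <= iarr x, 0 <= isize x, isize x <= 1 & 1 <= idur x].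
  move=> x hx; move/allP: hv => /(_ x hx) /and4P[h1 h2 h3 _].
  by move/allP: hd => /(_ x hx) h4; split.
have hdx : forall x, x \in I -> 1 <= idur x by move=> x /hvx[].
set J := small_parts C I.
have hJs : all (fun y => 0 <= isize y) J.
  apply/allP => y /mapP[x hx ->]; have [_ -> _ _] := small_facts C (hdx x hx).
  by case: (hvx x hx).
have hJd : all (fun y => idur y <= L) J.
  by apply/allP => y /mapP[x hx ->]; have [_ _ -> _] := small_facts C (hdx x hx).
have hJa : all (fun y => 0 <= iarr y) J.
  apply/allP => y /mapP[x hx ->]; have [-> _ _ _] := small_facts C (hdx x hx).
  by case: (hvx x hx).
have hg0 : 0 <= \sum_(x <- I) (2 * isize x) * (ivb (iarr x, iarr x + 3 * L) t)%:R.
  rewrite big_seq; apply: sumr_ge0 => x hx; apply: mulr_ge0 => //.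
  by apply: mulr_ge0 => //; case: (hvx x hx).
case: (posnP (ff_open_bins J t)) => [-> | hpos].
  by rewrite (_ : (0%N)%:R = 0 :> R) //; apply: addr_ge0.
have [[y hyJ hyp] hb] := ff_bound hL0 ht hJs hJd hJa hpos.
move: hyJ => /mapP[x hx hy]; subst y.
have [ha hs hdd hdep] := small_facts C (hdx x hx).
have hxp : present t x.
  by move: hyp; rewrite /present ha => /andP[h1 h2]; rewrite h1 (lt_le_trans h2 hdep).
have h1 : (1 <= OPT_t I t)%N.
  apply: OPT_ge1; apply/eqP => h.
  have : x \in present_items I t by rewrite mem_filter hxp hx.
  by rewrite h.
apply: le_trans hb _.
apply: lerD; first by rewrite ler1n.
rewrite /J /small_parts big_map mulr_sumr big_mkcond /=.
apply: ler_sum_seq => z hz.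
have [ha' hs' _ _] := small_facts C (hdx z hz).
case: ifP => [/andP[h2 h3] | _].
  have -> : ivb (iarr z, iarr z + 3 * L) t.
    by rewrite /ivb /= h2 /=; lra.
  by rewrite mulr1.
by apply: mulr_ge0 => //; apply: mulr_ge0 => //; case: (hvx z hz).
Qed.

Lemma hlow (I : seq (item R)) t : all (@valid_item R) I -> all (fun x => 1 <= idur x) I ->
  \sum_(x <- I) isize x * (ivb (iarr x, iarr x + 1) t)%:R <= (OPT_t I t)%:R.
Proof.
move=> hv hd; apply: le_trans (OPT_ge_sum t hv).
rewrite /present_items big_filter [X in _ <= X]big_mkcond /=.
apply: ler_sum_seq => x hx.
move/allP: hv => /(_ x hx) /and4P[_ h2 _ _].
move/allP: hd => /(_ x hx) h4.
case: ifP => hp; case E: (ivb (iarr x, iarr x + 1) t); rewrite ?mulr1 ?mulr0 //.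
move: E hp; rewrite /ivb /present /dep /= => /andP[-> h] /=.
by rewrite (lt_le_trans h) // lerD2l.
Qed.

Lemma meas_ff (J : seq (item R)) :
  measurable_fun D (fun t : measurableTypeR R => ((ff_open_bins J t)%:R : R)%:E).
Proof.
have -> : (fun t : measurableTypeR R => ((ff_open_bins J t)%:R : R)%:E) =
  (fun t => (fun s => ((count id s)%:R : R)%:E)
     (map ((@ivb R) ^~ t) (map (fun b : seq (item R) => (bin_open b, bin_close b)) (ff_bins J)))).
  apply/funext => t; rewrite -map_comp count_map /ff_open_bins.
  by congr ((_%:R)%:E); apply: eq_count.
exact: (meas_fun_bv (map (fun b : seq (item R) => (bin_open b, bin_close b)) (ff_bins J)) (fun s => ((count id s)%:R : R)%:E)).
Qed.

Lemma meas_opt (I : seq (item R)) :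
  measurable_fun D (fun t : measurableTypeR R => ((OPT_t I t)%:R : R)%:E).
Proof.
have -> : (fun t : measurableTypeR R => ((OPT_t I t)%:R : R)%:E) =
  (fun t => (fun s => (((fun P : seq (item R) =>
       \big[minn/size P]_(k < (size P).+1 | packable P k) k) (mask s I))%:R : R)%:E)
     (map ((@ivb R) ^~ t) (map (fun x : item R => (iarr x, dep x)) I))).
  apply/funext => t; rewrite /OPT_t /present_items filter_mask -map_comp.
  by [].
exact: (meas_fun_bv (map (fun x : item R => (iarr x, dep x)) I) (fun s => (((fun P : seq (item R) =>
       \big[minn/size P]_(k < (size P).+1 | packable P k) k) (mask s I))%:R : R)%:E)).
Qed.

End Main.

Unset Implicit Arguments.

Theorem lemma16 (R : realType) :
  exists K : R, forall (C : R) (I : seq (item R)),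
    1 <= C ->
    all (@valid_item R) I ->
    all (fun x => 1 <= idur x) I ->
    (FirstFit (small_parts C I) <= (K * Num.sqrt C)%:E * OPT I)%E.
Proof.
exists 7 => C I hC hv hd.
set L := Num.sqrt C.
have hL1 : 1 <= L by rewrite /L -sqrtr1 ler_wsqrtr.
have hvx : forall x, x \in I -> 0 <= isize x /\ 0 <= iarr x.
  by move=> x hx; move/allP: hv => /(_ x hx) /and4P[h1 h2 _ _].
have mD : measurable (`[0%R, +oo[%classic : set (measurableTypeR R)) by exact: measurable_itv.
pose g2 := fun t => \sum_(x <- I) (2 * isize x) * (ivb (iarr x, iarr x + 3 * L) t)%:R.
have step1 : (FirstFit (small_parts C I) <=
   \int[lebesgue_measure]_(t in `[0%R, +oo[%classic : set (measurableTypeR R))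
      (((OPT_t I t)%:R : R)%:E + (g2 t)%:E))%E.
  rewrite /FirstFit; apply: ge0_le_integral.
  - exact: mD.
  - by move=> t _; rewrite lee_fin ler0n.
  - exact: meas_ff.
  - apply: emeasurable_funD; first exact: meas_opt.
    exact: meas_sum.
  - move=> t ht; have ht' : 0 <= t by move: ht; rewrite /= in_itv /= andbT.
    by rewrite -EFinD lee_fin; apply: pointwise.
have hL0 : 0 < L by lra.
have step2 : (\int[lebesgue_measure]_(t in `[0%R, +oo[%classic : set (measurableTypeR R))
      (((OPT_t I t)%:R : R)%:E + (g2 t)%:E) =
   OPT I + (\sum_(x <- I) (2 * isize x) * (3 * L))%:E)%E.
  rewrite ge0_integralD.
  - congr (_ + _)%E.
    have E := int_sum (I := I) (c := fun x => 2 * isize x) (w := 3 * L).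
    apply: E; first by lra.
    by move=> x hx; have [h1 h2] := hvx x hx; split => //; apply: mulr_ge0.
  - exact: mD.
  - by move=> t _; rewrite lee_fin ler0n.
  - exact: meas_opt.
  - move=> t _; rewrite lee_fin /g2 big_seq; apply: sumr_ge0 => x hx.
    by have [h1 h2] := hvx x hx; apply: mulr_ge0 => //; apply: mulr_ge0.
  - exact: meas_sum.
have step3 : ((\sum_(x <- I) isize x * 1)%:E <= OPT I)%E.
  have E := int_sum (I := I) (c := fun x => isize x) (w := 1) ltr01 hvx.
  rewrite -E.
  rewrite /OPT; apply: ge0_le_integral.
  - exact: mD.
  - move=> t _; rewrite lee_fin big_seq; apply: sumr_ge0 => x hx.
    by have [h1 h2] := hvx x hx; apply: mulr_ge0.
  - exact: meas_sum.
  - exact: meas_opt.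
  - by move=> t _; rewrite lee_fin; apply: hlow.
have hS0 : 0 <= \sum_(x <- I) isize x.
  by rewrite big_seq; apply: sumr_ge0 => x hx; case: (hvx x hx).
have e1 : \sum_(x <- I) (2 * isize x) * (3 * L) = 6 * L * \sum_(x <- I) isize x.
  rewrite -mulr_suml -mulr_sumr; ring.
have e2 : \sum_(x <- I) isize x * 1 = \sum_(x <- I) isize x.
  by apply: eq_bigr => x _; rewrite mulr1.
move: step1; rewrite step2 e1 => step1.
move: step3; rewrite e2 => step3.
move: step1 step3; set S := \sum_(x <- I) isize x in hS0 *; case: (OPT I) => [r | | ] h1 h3.
- apply: (le_trans h1); rewrite -EFinD -EFinM lee_fin.
  move: h3; rewrite lee_fin => h3.
  have hr : 0 <= r by lra.
  have ha : L * S <= L * r by apply: ler_wpM2l; lra.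
  have hb : r <= L * r by rewrite -{1}[r]mul1r; apply: ler_wpM2r.
  lra.
- by rewrite muleC gt0_mulye ?leey // lte_fin; lra.
- by move: h3; rewrite leeNy_eq.
Qed.
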